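(* For every $n\ge2$, the sum of the Wiener indices of all plane trees on $n$ vertices is $$\sum_T\ \sum_{\{u,w\}} d(u,w)=(n-1)4^{n-2},$$ where $T$ ranges over plane trees on $n$ vertices and $\{u,w\}$ over unordered pairs of distinct vertices of $T$. Consequently, the expected distance between a uniformly random pair of distinct vertices in a uniformly random plane tree on $n$ vertices equals $\frac{(2n-2)!!}{2(2n-3)!!}$. This equals the expected length of the root-to-leaf path for a uniformly random pair (plane tree on $n$ vertices, leaf of it).
   Context: General (plane) trees are rooted trees in which each vertex may have any number of children, linearly ordered. The size of a tree is its number of vertices, and a leaf is a vertex with no children. $d(u,w)$ is the number of edges of the path between $u$ and $w$. The double factorials are $(2m)!!=2\cdot4\cdots(2m)$ and $(2m-1)!!=1\cdot3\cdots(2m-1)$. *)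

(* Defs.v *)
From HB Require Import structures.
From mathcomp Require Import all_boot all_order all_algebra.
From Stdlib Require List.
Set Implicit Arguments. Unset Strict Implicit. Unset Printing Implicit Defensive.

Inductive ptree : Type := Node of seq ptree.

Fixpoint ptsize (t : ptree) : nat :=
  let: Node cs := t in
  (fix go (cs : seq ptree) : nat :=
     match cs with [::] => 0 | c :: cs' => ptsize c + go cs' end) cs + 1.

(* Vertices are identified by their address from the root: the sequence of
   child indices followed from the root ([::] is the root). *)
Fixpoint vertices (t : ptree) : seq (seq nat) :=
  let: Node cs := t in
  [::] :: (fix go (i : nat) (cs : seq ptree) : seq (seq nat) :=
     match cs with
     | [::] => [::]
     | c :: cs' => map (cons i) (vertices c) ++ go i.+1 cs'
     end) 0 cs.

Fixpoint leaves (t : ptree) : seq (seq nat) :=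
  let: Node cs := t in
  match cs with
  | [::] => [:: [::]]
  | _ => (fix go (i : nat) (cs : seq ptree) : seq (seq nat) :=
     match cs with
     | [::] => [::]
     | c :: cs' => map (cons i) (leaves c) ++ go i.+1 cs'
     end) 0 cs
  end.

(* length of the longest common prefix of two addresses
   (= depth of the lowest common ancestor) *)
Fixpoint lcp (u w : seq nat) : nat :=
  match u, w with
  | a :: u', b :: w' => if a == b then (lcp u' w').+1 else 0
  | _, _ => 0
  end.

(* d(u,w): number of edges of the tree path between vertices u and w
   (the path goes up from u to the lowest common ancestor, then down to w). *)
Definition dist (u w : seq nat) : nat := size u + size w - 2 * lcp u w.

Definition wiener (t : ptree) : nat :=
  let vs := vertices t in
  \sum_(j < size vs) \sum_(i < j) dist (nth [::] vs i) (nth [::] vs j).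

Fixpoint dfact (k : nat) : nat :=
  match k with
  | 0 => 1
  | 1 => 1
  | k'.+2 => k'.+2 * dfact k'
  end.

(* Main.v *)
Require Import Defs.
From HB Require Import structures.
From mathcomp Require Import all_boot all_order all_algebra.
From Stdlib Require List.
Import Order.TTheory GRing.Theory Num.Theory.
From mathcomp Require Import ring lra zify.
From Stdlib Require Import Lia.
From Stdlib Require Permutation.
Set Implicit Arguments. Unset Strict Implicit. Unset Printing Implicit Defensive.

Module Part1.
Local Open Scope ring_scope.

Lemma Bnat m : ('C((m.+1).*2, m.+1) * m.+1 = (4 * m + 2) * 'C(m.*2, m))%N.
Proof.
have h1 := mul_bin_diag (m.+1).*2 m.
have h2 := mul_bin_diag (m.*2).+1 m.
have h3 : 'C((m.*2).+1, m.+1) = 'C((m.*2).+1, m).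
  rewrite -{1}(bin_sub (n:=(m.*2).+1) (m:=m)); last by rewrite -addnn; lia.
  congr 'C(_,_); rewrite -addnn; lia.
rewrite doubleS /= in h1 *; rewrite h3 in h2.
move: h1 h2; rewrite -!addnn.
move: ('C(_, m.+1)) ('C(_, m)) ('C(m + m, m)) => x y z h1 h2; nia.
Qed.

Definition B m : rat := ('C(m.*2, m))%:R.
Definition C m : rat := B m / (m.+1)%:R.

Lemma B0 : B 0 = 1. Proof. by rewrite /B. Qed.
Lemma B1 : B 1 = 2. Proof. by rewrite /B. Qed.

Lemma Brec m : B m.+1 * (m.+1)%:R = (4 * m + 2)%:R * B m.
Proof. by rewrite /B -!natrM Bnat. Qed.

Lemma CB m : (m.+1)%:R * C m = B m.
Proof. by rewrite /C mulrC divfK // pnatr_eq0. Qed.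

Lemma BrecD m : B m.+1 = (4 * m + 2)%:R * B m / (m.+1)%:R.
Proof. by rewrite -Brec mulfK // pnatr_eq0. Qed.

Definition conv (f g : nat -> rat) N := \sum_(0 <= a < N.+1) f a * g (N - a)%N.

Lemma conv_sym f g N : conv f g N = conv g f N.
Proof.
rewrite /conv big_nat_rev /=; apply: eq_big_nat => a /andP[_ ha].
rewrite add0n subSS subKn -1?ltnS // mulrC //.
Qed.

Lemma conv_shift f g N : conv f g N.+1 = f 0%N * g N.+1 + conv (fun a => f a.+1) g N.
Proof. by rewrite /conv big_nat_recl //= subn0. Qed.

Lemma conv_ext f1 f2 g1 g2 N :
  (forall a, (a <= N)%N -> f1 a * g1 (N - a)%N = f2 a * g2 (N - a)%N) ->
  conv f1 g1 N = conv f2 g2 N.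
Proof. by move=> h; apply: eq_big_nat => a /andP[_ ha]; apply: h. Qed.

Lemma convD f1 f2 g N : conv (fun a => f1 a + f2 a) g N = conv f1 g N + conv f2 g N.
Proof. by rewrite /conv -big_split; apply: eq_bigr => a _; rewrite mulrDl. Qed.

Lemma convZ c f g N : conv (fun a => c * f a) g N = c * conv f g N.
Proof. by rewrite /conv mulr_sumr; apply: eq_bigr => a _; rewrite mulrA. Qed.

Definition P4 a : rat := 4%:R ^+ a.

Lemma weight_split f g N : (N%:R) * conv f g N =
  conv (fun a => a%:R * f a) g N + conv f (fun b => b%:R * g b) N.
Proof.
rewrite /conv mulr_sumr -big_split; apply: eq_big_nat => a /andP[_ ha] /=.
have -> : (N%:R : rat) = a%:R + (N - a)%N%:R by rewrite -natrD subnKC // -ltnS.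
move: (f a) (g (N - a)%N) (a%:R : rat) ((N - a)%N%:R : rat) => x y u v.
ring.
Qed.

Lemma E2_aux N : conv B B N = P4 N /\ conv (fun a => a%:R * B a) B N = N%:R * P4 N / 2.
Proof.
elim: N => [|N [IH1 IH2]].
  rewrite /conv !big_nat1 /P4 subnn B0; split; [by rewrite mulr1 | by rewrite !mul0r].
have hA : conv (fun a => a%:R * B a) B N.+1 = N.+1%:R * P4 N.+1 / 2.
  rewrite conv_shift mul0r add0r.
  rewrite (conv_ext (f2 := fun a => 4%:R * (a%:R * B a) + 2%:R * B a) (g2 := B)); last first.
    move=> a _; congr (_ * _); rewrite mulrC Brec.
    rewrite natrD natrM; move: (B a) (a%:R : rat) => x y; ring.
  rewrite convD !convZ IH1 IH2 /P4 exprS.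
  move: (4%:R ^+ N : rat) => x; rewrite -[N.+1%:R]natr1; move: (N%:R : rat)=> y; by field.
split; last exact: hA.
have := weight_split B B N.+1; rewrite -(conv_sym (fun a => a%:R * B a)) hA.
move=> h; have nz : (N.+1%:R : rat) != 0 by rewrite pnatr_eq0.
apply: (mulfI nz).
rewrite h; move: (P4 N.+1) (N.+1%:R : rat) => x y; by field.
Qed.

Lemma nS (n : nat) : (n.+1%:R : rat) = n%:R + 1. Proof. by rewrite -natr1. Qed.
Lemma nSS (n : nat) : (n.+2%:R : rat) = n%:R + 2. Proof. by rewrite -!natr1 -addrA. Qed.
Lemma n42 (n : nat) : ((4 * n + 2)%N%:R : rat) = 4 * n%:R + 2. Proof. by rewrite natrD natrM. Qed.
Lemma n46 (n : nat) : ((4 * n.+1 + 2)%N%:R : rat) = 4 * n%:R + 6.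
Proof. rewrite n42 [n.+1%:R]nS; move: (n%:R : rat) => x; ring. Qed.

Lemma pos_ne0 (y c : rat) : 0 <= y -> 0 < c -> y + c != 0.
Proof. move=> h1 h2; rewrite gt_eqF //; lra. Qed.
Lemma nat_ge0 n : 0 <= (n%:R : rat). Proof. exact: ler0n. Qed.
Lemma pos_ne0' (y c : rat) : 0 <= y -> 0 < c -> c + y != 0.
Proof. by move=> h1 h2; rewrite addrC pos_ne0. Qed.
Ltac fld := field; repeat (apply/andP; split); try (apply/negP => /eqP ?; lra).

Lemma weight_gen f g N i j : ((N + i + j)%N%:R) * conv f g N =
  conv (fun a => (a + i)%N%:R * f a) g N + conv f (fun b => (b + j)%N%:R * g b) N.
Proof.
rewrite /conv mulr_sumr -big_split; apply: eq_big_nat => a /andP[_ ha] /=.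
have -> : ((N + i + j)%N%:R : rat) = (a + i)%N%:R + (N - a + j)%N%:R.
  by rewrite -natrD; congr (_%:R); rewrite -ltnS in ha; lia.
move: (f a) (g (N - a)%N) ((a+i)%N%:R : rat) ((N - a + j)%N%:R : rat) => x y u v.
ring.
Qed.

Lemma E2 N : conv B B N = P4 N. Proof. by case: (E2_aux N). Qed.

Lemma U_aux N : conv B C N = B N.+1 / 2 /\
   conv (fun a => a%:R * B a) C N = N.+1%:R * B N.+1 / 2 - P4 N.
Proof.
elim: N => [|N [IH1 IH2]].
  rewrite /conv !big_nat1 /P4 subnn /C B0 B1; split; rewrite ?expr0; by field.
have hA : conv (fun a => a%:R * B a) C N.+1 = N.+2%:R * B N.+2 / 2 - P4 N.+1.
  rewrite conv_shift mul0r add0r.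
  rewrite (conv_ext (f2 := fun a => 4%:R * (a%:R * B a) + 2%:R * B a) (g2 := C)); last first.
    move=> a _; congr (_ * _); rewrite mulrC Brec.
    rewrite natrD natrM; move: (B a) (a%:R : rat) => x y; ring.
  rewrite convD !convZ IH1 IH2 /P4 exprS (BrecD N.+1) n46 [N.+2%:R]nSS [N.+1%:R]nS.
  have:= nat_ge0 N; move: (4%:R ^+ N : rat) (B N.+1) (N%:R : rat) => x b y hy.
  by fld.
split; last exact: hA.
have h := weight_gen B C N.+1 0 1.
rewrite (conv_ext (f1 := fun a => (a + 0)%N%:R * B a) (f2 := fun a => a%:R * B a) (g2 := C)) in h; last by move=> a _ /=; rewrite addn0.
rewrite (conv_ext (f1 := B) (f2 := B) (g1 := fun b => (b + 1)%N%:R * C b) (g2 := B)) in h; last by move=> a _ /=; rewrite addn1 CB.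
rewrite hA E2 addn0 addn1 in h.
have nz : (N.+2%:R : rat) != 0 by rewrite pnatr_eq0.
apply: (mulfI nz); rewrite h /P4.
by move: (B N.+2) (N.+2%:R : rat) (4%:R ^+ N.+1 : rat) => x y z; field.
Qed.

Lemma Ubc N : conv B C N = B N.+1 / 2. Proof. by case: (U_aux N). Qed.

Lemma Cconv N : conv C C N = C N.+1.
Proof.
have h := weight_gen C C N 1 1.
rewrite (conv_ext (f1 := fun a => (a + 1)%N%:R * C a) (f2 := B) (g2 := C)) in h; last by move=> a _ /=; rewrite addn1 CB.
rewrite (conv_ext (f1 := C) (f2 := C) (g1 := fun b => (b + 1)%N%:R * C b) (g2 := B)) in h; last by move=> a _ /=; rewrite addn1 CB.
rewrite -(conv_sym B C) Ubc in h.
have nz : ((N + 1 + 1)%N%:R : rat) != 0 by rewrite pnatr_eq0 addn1.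
apply: (mulfI nz); rewrite h /C !addn1.
have:= nat_ge0 N; move: (B N.+1) (N%:R : rat) => x y hy; by fld.
Qed.

Lemma Qconv N : conv P4 C N = (P4 N.+1 - B N.+1) / 2.
Proof.
elim: N => [|N IH].
  by rewrite /conv big_nat1 /P4 /C B0 B1 expr0 expr1.
rewrite conv_shift (conv_ext (f2 := fun a => 4%:R * P4 a) (g2 := C)); last first.
  by move=> a _; rewrite /P4 exprS.
rewrite convZ IH /C (BrecD N.+1) n46 /P4 !exprS expr0 [N.+2%:R]nSS.
have:= nat_ge0 N; move: (4%:R ^+ N : rat) (B N.+1) (N%:R : rat) => x b y hy.
by fld.
Qed.

Lemma R1conv N : conv P4 B N = (2 * N%:R + 1) * B N.
Proof.
elim: N => [|N IH].
  by rewrite /conv big_nat1 /P4 B0 expr0 mulr0 add0r !mulr1.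
rewrite conv_shift (conv_ext (f2 := fun a => 4%:R * P4 a) (g2 := B)); last first.
  by move=> a _; rewrite /P4 exprS.
rewrite convZ IH (BrecD N) n42 /P4 expr0 [N.+1%:R]nS.
have:= nat_ge0 N; move: (B N) (N%:R : rat) => b y hy.
by fld.
Qed.

Lemma R2conv N : conv (fun a => a%:R * P4 a) C N = N.+1%:R * P4 N.+1 / 2 - 2 * (2 * N%:R + 1) * B N.
Proof.
elim: N => [|N IH].
  by rewrite /conv big_nat1 /P4 /C B0 !mul0r expr1 mulr1 mulr0 add0r mulr1; field.
rewrite conv_shift mul0r add0r.
rewrite (conv_ext (f2 := fun a => 4%:R * (a%:R * P4 a) + 4%:R * P4 a) (g2 := C)); last first.
  by move=> a _; rewrite /P4 exprS [a.+1%:R]nS; congr (_ * _); ring.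
rewrite convD !convZ IH Qconv (BrecD N) n42 /P4 !exprS [N.+2%:R]nSS [N.+1%:R]nS.
have:= nat_ge0 N; move: (B N) (N%:R : rat) (4%:R ^+ N : rat) => b y x hy.
by fld.
Qed.


Definition cntf n := C n.-1.
Definition sdf n := (P4 n.-1 - B n.-1) / 2.
Definition swf n := n.-1%:R * P4 n.-1 / 2.
Definition islf n : rat := (n == 1%N)%:R.
Arguments islf : simpl never.
Definition slcf n := B n.-1 / 2 + islf n / 2.
Definition sldf n := P4 n.-1 / 4 - islf n / 4.

Lemma FC N : \sum_(0 <= a < N.+1) (cntf a.+1 * cntf (N - a).+1) = cntf N.+2.
Proof. exact: Cconv. Qed.

Lemma FD N : \sum_(0 <= a < N.+1) (sdf a.+1 * cntf (N - a).+1 + a.+1%:R * cntf a.+1 * cntf (N - a).+1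
    + cntf a.+1 * sdf (N - a).+1) = sdf N.+2.
Proof.
have -> : \sum_(0 <= a < N.+1) (sdf a.+1 * cntf (N - a).+1 + a.+1%:R * cntf a.+1 * cntf (N - a).+1
    + cntf a.+1 * sdf (N - a).+1) =
  1/2 * conv P4 C N + (-1/2) * conv B C N + conv B C N + 1/2 * conv C P4 N + (-1/2) * conv C B N.
  rewrite /conv !mulr_sumr -!big_split /=; apply: eq_big_nat => a _.
  rewrite /sdf /cntf /= /C [a.+1%:R]nS [(N - a).+1%:R]nS.
  have:= nat_ge0 a; have := nat_ge0 (N - a).
  move: (B a) (B (N-a)) (P4 a) (P4 (N-a)) (a%:R : rat) ((N - a)%:R : rat) => ba bb pa pb x y hy hx.
  by fld.
rewrite (conv_sym C P4) (conv_sym C B) Qconv Ubc /sdf /=.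
by move: (P4 N.+1) (B N.+1) => x y; field.
Qed.

Lemma conv_I0 g N : conv (fun a => islf a.+1) g N = g N.
Proof.
rewrite /conv big_nat_recl // subn0 /islf eqxx mul1r big1 ?addr0 // => a _.
by rewrite mul0r.
Qed.

Ltac pw a N := rewrite /sdf /swf /slcf /sldf /cntf /= /C ?[a.+1%:R]nS ?[(N - a).+1%:R]nS;
  have:= nat_ge0 a; have := nat_ge0 (N - a);
  move: (B a) (B (N-a)) (P4 a) (P4 (N-a)) (a%:R : rat) ((N - a)%:R : rat)
        (islf a.+1) (islf (N - a).+1) => ba bb pa pb x y ia ib hy hx;
  by fld.

Lemma FW N : \sum_(0 <= a < N.+1) (swf a.+1 * cntf (N - a).+1 + cntf a.+1 * swf (N - a).+1 +
   2 * ((N - a).+1%:R * sdf a.+1 * cntf (N - a).+1 + a.+1%:R * (N - a).+1%:R * cntf a.+1 * cntf (N - a).+1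
        + a.+1%:R * cntf a.+1 * sdf (N - a).+1)) = swf N.+2.
Proof.
have -> : \sum_(0 <= a < N.+1) (swf a.+1 * cntf (N - a).+1 + cntf a.+1 * swf (N - a).+1 +
   2 * ((N - a).+1%:R * sdf a.+1 * cntf (N - a).+1 + a.+1%:R * (N - a).+1%:R * cntf a.+1 * cntf (N - a).+1
        + a.+1%:R * cntf a.+1 * sdf (N - a).+1)) =
  1/2 * conv (fun a => a%:R * P4 a) C N + 1/2 * conv C (fun b => b%:R * P4 b) N + conv P4 B N
  + (-1) * conv B B N + 2 * conv B B N + conv B P4 N + (-1) * conv B B N.
  rewrite /conv !mulr_sumr -!big_split /=; apply: eq_big_nat => a _.
  pw a N.
rewrite (conv_sym C) (conv_sym B P4) R2conv R1conv E2 /swf /=.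
by move: (P4 N.+1) (B N) (P4 N) (N%:R : rat) => x y z w; rewrite [N.+1%:R]nS; field.
Qed.

Lemma FLc N : \sum_(0 <= a < N.+1) (slcf a.+1 * cntf (N - a).+1 + cntf a.+1 * slcf (N - a).+1
    - cntf a.+1 * islf (N - a).+1) = slcf N.+2.
Proof.
have -> : \sum_(0 <= a < N.+1) (slcf a.+1 * cntf (N - a).+1 + cntf a.+1 * slcf (N - a).+1
    - cntf a.+1 * islf (N - a).+1) =
  1/2 * conv B C N + 1/2 * conv (fun a => islf a.+1) C N + 1/2 * conv C B N
  + 1/2 * conv C (fun b => islf b.+1) N + (-1) * conv C (fun b => islf b.+1) N.
  rewrite /conv !mulr_sumr -!big_split /=; apply: eq_big_nat => a _.
  pw a N.
rewrite (conv_sym C (fun b => islf b.+1)) (conv_sym C B) !conv_I0 Ubc /slcf /= /islf /=.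
by move: (B N.+1) (C N) => x y; field.
Qed.

Lemma FLD N : \sum_(0 <= a < N.+1) (sldf a.+1 * cntf (N - a).+1 + slcf a.+1 * cntf (N - a).+1
    + cntf a.+1 * sldf (N - a).+1) = sldf N.+2.
Proof.
have -> : \sum_(0 <= a < N.+1) (sldf a.+1 * cntf (N - a).+1 + slcf a.+1 * cntf (N - a).+1
    + cntf a.+1 * sldf (N - a).+1) =
  1/4 * conv P4 C N + (-1/4) * conv (fun a => islf a.+1) C N + 1/2 * conv B C N
  + 1/2 * conv (fun a => islf a.+1) C N + 1/4 * conv C P4 N + (-1/4) * conv C (fun b => islf b.+1) N.
  rewrite /conv !mulr_sumr -!big_split /=; apply: eq_big_nat => a _.
  pw a N.
rewrite (conv_sym C (fun b => islf b.+1)) (conv_sym C P4) !conv_I0 Ubc Qconv /sldf /= /islf /= /P4 exprS.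
by move: (B N.+1) (C N) (4%:R ^+ N : rat) => x y z; field.
Qed.

End Part1.
Import Part1.

Module Part2.

Definition join (c t : ptree) : ptree := let: Node cs := t in Node (c :: cs).
Definition sh (u : seq nat) : seq nat := if u is i :: w then i.+1 :: w else [::].

Definition gov := fix go (i : nat) (cs : seq ptree) : seq (seq nat) :=
  match cs with [::] => [::] | c :: cs' => map (cons i) (vertices c) ++ go i.+1 cs' end.
Definition gol := fix go (i : nat) (cs : seq ptree) : seq (seq nat) :=
  match cs with [::] => [::] | c :: cs' => map (cons i) (leaves c) ++ go i.+1 cs' end.

Lemma vert_node cs : vertices (Node cs) = [::] :: gov 0 cs. Proof. by []. Qed.
Lemma vert_join c cs : vertices (Node (c :: cs)) = [::] :: (map (cons 0) (vertices c) ++ gov 1 cs).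
Proof. by []. Qed.
Lemma leaves_join c cs : leaves (Node (c :: cs)) = map (cons 0) (leaves c) ++ gol 1 cs.
Proof. by []. Qed.
Lemma leaves_cons d ds : leaves (Node (d :: ds)) = gol 0 (d :: ds). Proof. by []. Qed.

Lemma gov_sh i cs : gov i.+1 cs = map sh (gov i cs).
Proof.
elim: cs i => [|c cs IH] i //=.
by rewrite IH map_cat -!map_comp.
Qed.

Lemma gol_sh i cs : gol i.+1 cs = map sh (gol i cs).
Proof.
elim: cs i => [|c cs IH] i //=.
by rewrite IH map_cat -!map_comp.
Qed.

Lemma sum_vert_join (F : seq nat -> nat) c t :
  \sum_(u <- vertices (join c t)) F u =
  (\sum_(u <- vertices c) F (0 :: u) + \sum_(w <- vertices t) F (sh w))%N.
Proof.
case: t => cs; rewrite /join vert_join vert_node !big_cons big_cat gov_sh !big_map /=.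
by rewrite addnCA.
Qed.

Lemma size_sh u : size (sh u) = size u. Proof. by case: u. Qed.

Lemma dist_00 u w : dist (0 :: u) (0 :: w) = dist u w.
Proof. rewrite /dist /=; lia. Qed.

Lemma dist_shsh u w : dist (sh u) (sh w) = dist u w.
Proof. by case: u => [|i u]; case: w => [|j w]. Qed.

Lemma dist_0sh u w : dist (0 :: u) (sh w) = ((size u).+1 + size w)%N.
Proof. case: w => [|j w]; rewrite /dist /= ?addn0 ?subn0 //. Qed.

Lemma dist_sh0 u w : dist (sh w) (0 :: u) = ((size u).+1 + size w)%N.
Proof. case: w => [|j w]; rewrite /dist /= ?addn0 ?subn0 ?addn0 //; lia. Qed.

Definition Nv t := size (vertices t).
Definition Dv t := \sum_(u <- vertices t) size u.
Definition W2 t := \sum_(u <- vertices t) \sum_(w <- vertices t) dist u w.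
Definition Lc t := size (leaves t).
Definition LD t := \sum_(l <- leaves t) size l.
Definition isl (t : ptree) : nat := if t is Node [::] then 1 else 0.

Lemma sum_constn (T : Type) (s : seq T) (c : nat) : \sum_(x <- s) c = (c * size s)%N.
Proof. elim: s => [|x s IH]; rewrite ?big_nil ?big_cons ?IH /= ?muln0 ?mulnS //. Qed.

Lemma Nv_join c t : Nv (join c t) = (Nv c + Nv t)%N.
Proof. by rewrite /Nv -!sum1_size sum_vert_join. Qed.

Lemma Dv_join c t : Dv (join c t) = (Dv c + Nv c + Dv t)%N.
Proof.
rewrite /Dv /Nv sum_vert_join /=.
under [X in (_ + X)%N]eq_bigr do rewrite size_sh.
rewrite -sum1_size -big_split /=; congr (_ + _)%N.
by apply: eq_bigr => u _; rewrite addn1.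
Qed.

Lemma sum_cross (A : Type) (s1 s2 : seq A) (f g : A -> nat) :
  \sum_(u <- s1) \sum_(w <- s2) (f u + g w)%N =
  (size s2 * \sum_(u <- s1) f u + size s1 * \sum_(w <- s2) g w)%N.
Proof.
elim: s1 => [|x s IH]; first by rewrite !big_nil muln0.
rewrite !big_cons IH big_split /= sum_constn /=; lia.
Qed.

Lemma W2_join c t : W2 (join c t) =
  (W2 c + W2 t + 2 * (Dv c * Nv t + Nv c * Nv t + Nv c * Dv t))%N.
Proof.
rewrite /W2.
have h1 u : \sum_(w <- vertices (join c t)) dist (0 :: u) w =
   (\sum_(w <- vertices c) dist u w + \sum_(w <- vertices t) ((size u).+1 + size w))%N.
  by rewrite sum_vert_join; congr (_ + _)%N; apply: eq_bigr => w _; [exact: dist_00 | exact: dist_0sh].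
have h2 w : \sum_(w' <- vertices (join c t)) dist (sh w) w' =
   (\sum_(u <- vertices c) ((size u).+1 + size w) + \sum_(w' <- vertices t) dist w w')%N.
  by rewrite sum_vert_join; congr (_ + _)%N; apply: eq_bigr => w' _; [exact: dist_sh0 | exact: dist_shsh].
rewrite sum_vert_join (eq_bigr _ (fun u _ => h1 u)) (eq_bigr _ (fun w _ => h2 w)).
rewrite !big_split /=.
have e1 := sum_cross (vertices c) (vertices t) (fun u => (size u).+1) (fun w => size w).
have e2 : \sum_(i <- vertices t) \sum_(u <- vertices c) ((size u).+1 + size i) =
   \sum_(u <- vertices c) \sum_(i <- vertices t) ((size u).+1 + size i) by exact: exchange_big.
rewrite e2 e1.
have e3 : \sum_(u <- vertices c) (size u).+1 = (Dv c + Nv c)%N.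
  by rewrite /Dv /Nv -sum1_size -big_split /=; apply: eq_bigr => u _; rewrite addn1.
rewrite e3 /Dv /Nv; lia.
Qed.

Lemma Lc_join c t : (Lc (join c t) + isl t = Lc c + Lc t)%N.
Proof.
case: t => [[|d ds]]; rewrite /Lc /join leaves_join.
  by rewrite /= cats0 size_map addn1.
by rewrite leaves_cons gol_sh size_cat !size_map addn0.
Qed.

Lemma LD_join c t : LD (join c t) = (LD c + Lc c + LD t)%N.
Proof.
rewrite /LD /Lc; case: t => [[|d ds]]; rewrite /join leaves_join.
  rewrite /= cats0 big_map big_cons big_nil /= addn0 addn0 -sum1_size -big_split /=.
  by apply: eq_bigr => u _; rewrite addn1.
rewrite leaves_cons gol_sh big_cat !big_map.
rewrite -sum1_size -big_split /=; congr (_ + _)%N.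
  by apply: eq_bigr => u _; rewrite addn1.
by apply: eq_bigr => u _; rewrite size_sh.
Qed.

Fixpoint prs (s1 s2 : seq ptree) : seq ptree :=
  if s1 is x :: s then map (join x) s2 ++ prs s s2 else [::].

Fixpoint Tf (f n : nat) : seq ptree :=
  match f with
  | 0 => [::]
  | f'.+1 => if n == 1%N then [:: Node [::]]
             else flatten [seq prs (Tf f' k) (Tf f' (n - k)) | k <- iota 1 n.-1]
  end.

Lemma Tf_one f : Tf f.+1 1 = [:: Node [::]]. Proof. by []. Qed.
Lemma Tf_step f N : Tf f.+1 N.+2 =
  flatten [seq prs (Tf f k) (Tf f (N.+2 - k)) | k <- iota 1 N.+1].
Proof. by []. Qed.

Lemma ptsize_join c t : ptsize (join c t) = (ptsize c + ptsize t)%N.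
Proof. by case: t => cs /=; rewrite addnA. Qed.

Lemma ptsize_pos t : (0 < ptsize t)%N.
Proof. by case: t => cs /=; rewrite addn1. Qed.

Lemma ptsize1 t : ptsize t = 1%N -> t = Node [::].
Proof.
case: t => [[|c cs]] // h.
have := ptsize_join c (Node cs); rewrite /join h.
have := ptsize_pos c; have := ptsize_pos (Node cs); lia.
Qed.

Lemma join_inj x y x' y' : join x y = join x' y' -> x = x' /\ y = y'.
Proof. by case: y => cs; case: y' => cs' [-> ->]. Qed.

Lemma In_cat (A : Type) (x : A) s1 s2 : List.In x (s1 ++ s2) <-> List.In x s1 \/ List.In x s2.
Proof. elim: s1 => [|y s IH] /=; [tauto | rewrite IH; tauto]. Qed.

Lemma In_map (A B : Type) (f : A -> B) y s : List.In y (map f s) <-> exists x, f x = y /\ List.In x s.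
Proof.
elim: s => [|x s IH] /=; first by split=> // [[x []]].
rewrite IH; split.
  by case=> [<-|[z [<- h]]]; [exists x; auto | exists z; auto].
by case=> z [<- [->|h]]; [left | right; exists z].
Qed.

Lemma In_flatten (A : Type) (x : A) ss : List.In x (flatten ss) <-> exists s, List.In s ss /\ List.In x s.
Proof.
elim: ss => [|s ss IH] /=; first by split=> // [[s []]].
rewrite In_cat IH; split.
  by case=> [h|[s' [h1 h2]]]; [exists s; auto | exists s'; auto].
by case=> s' [[<-|h1] h2]; [left | right; exists s'].
Qed.

Lemma In_prs t s1 s2 : List.In t (prs s1 s2) <->
  exists x y, t = join x y /\ List.In x s1 /\ List.In y s2.
Proof.
elim: s1 => [|x s IH] /=; first by split=> // [[x [y [_ []]]]].
rewrite In_cat IH In_map; split.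
  case=> [[y [<- h]]|[x' [y [-> [h1 h2]]]]]; [exists x, y; auto | exists x', y; auto].
case=> x' [y [-> [[<-|h1] h2]]]; [left; exists y; auto | right; exists x', y; auto].
Qed.

Lemma In_iota k m n : List.In k (iota m n) <-> (m <= k < m + n)%N.
Proof.
elim: n m => [|n IH] m /=; first by split=> //; lia.
rewrite IH; split; [case=> [<-|]; lia | move=> h; case: (eqVneq m k) => [->|ne]; [by left|right; lia]].
Qed.

Lemma NoDup_cat (A : Type) (s1 s2 : seq A) : List.NoDup s1 -> List.NoDup s2 ->
  (forall x, List.In x s1 -> ~ List.In x s2) -> List.NoDup (s1 ++ s2).
Proof.
elim: s1 => [|x s IH] //= h1 h2 hd.
inversion h1; subst; constructor.
  rewrite In_cat => -[//|]; apply: hd; by left.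
apply: IH => // y hy; apply: hd; by right.
Qed.

Lemma NoDup_map (A B : Type) (f : A -> B) s : (forall x y, f x = f y -> x = y) ->
  List.NoDup s -> List.NoDup (map f s).
Proof.
move=> inj; elim: s => [|x s IH] /= h; first by constructor.
inversion h as [|x' s' hx hs]; subst; constructor; last exact: IH.
by rewrite In_map => -[y [/inj e hy]]; subst.
Qed.

Lemma NoDup_prs s1 s2 : List.NoDup s1 -> List.NoDup s2 -> List.NoDup (prs s1 s2).
Proof.
elim: s1 => [|x s IH] /= h1 h2; first by constructor.
inversion h1; subst; apply: NoDup_cat.
- by apply: NoDup_map => // y y' /join_inj [].
- exact: IH.
- move=> t; rewrite In_map In_prs => -[y [<- _]] [x' [y' [/join_inj [ex _] [hx _]]]].
  by subst.
Qed.

Lemma In_mem (T : eqType) (x : T) s : (x \in s) <-> List.In x s.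
Proof.
elim: s => [|y s IH] //=; rewrite inE -IH; split.
  by case/orP=> [/eqP ->|h]; [left|right].
by case=> [->|h]; rewrite ?eqxx ?h ?orbT.
Qed.

Definition key (t : ptree) : nat := if t is Node (c :: _) then ptsize c else 0.
Lemma key_join x y : key (join x y) = ptsize x. Proof. by case: y. Qed.

Lemma NoDup_flatten_key (F : nat -> seq ptree) ks : uniq ks ->
  (forall k, k \in ks -> List.NoDup (F k)) ->
  (forall k t, k \in ks -> List.In t (F k) -> key t = k) ->
  List.NoDup (flatten [seq F k | k <- ks]).
Proof.
elim: ks => [|k ks IH] /=; first by constructor.
case/andP=> nk uk hn hk; apply: NoDup_cat.
- by apply: hn; rewrite inE eqxx.
- apply: IH => // [j hj|j t hj]; [apply: hn | apply: hk]; by rewrite inE hj orbT.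
- move=> t ht; rewrite In_flatten => -[s [/In_map [j [<- hj]] hs]].
  have e1 := hk k t (mem_head _ _) ht.
  have hj' : j \in ks by rewrite In_mem.
  have e2 : key t = j by apply: (hk j t); rewrite ?inE ?hj' ?orbT.
  by move: nk; rewrite -e1 e2 hj'.
Qed.

Lemma Tf_In f : forall n, (1 <= n <= f)%N -> forall t, List.In t (Tf f n) <-> ptsize t = n.
Proof.
elim: f => [|f IH] n hn t; first lia.
case: n hn => [|[|N]] hn; first lia.
  rewrite Tf_one /=; split; first by case=> [<-|[]].
  by move/ptsize1 => ->; left.
rewrite Tf_step In_flatten; split.
  case=> s [/In_map [k [<- hk]]] /In_prs [x [y [-> [hx hy]]]].
  move/In_iota: hk => hk.
  have h1 : ptsize x = k by apply/(IH k) => //; lia.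
  have h2 : ptsize y = (N.+2 - k)%N by apply/(IH (N.+2 - k)%N) => //; lia.
  rewrite ptsize_join h1 h2; lia.
case: t => [[|c cs]] ht; first by rewrite /= in ht.
have e := ptsize_join c (Node cs); rewrite /join ht in e.
have p1 := ptsize_pos c; have p2 := ptsize_pos (Node cs).
exists (prs (Tf f (ptsize c)) (Tf f (N.+2 - ptsize c))); split.
  apply/In_map; exists (ptsize c); split => //; apply/In_iota; lia.
apply/In_prs; exists c, (Node cs); split; first by [].
split; [apply/(IH (ptsize c)) | apply/(IH (N.+2 - ptsize c))] => //; lia.
Qed.

Lemma Tf_NoDup f : forall n, (1 <= n <= f)%N -> List.NoDup (Tf f n).
Proof.
elim: f => [|f IH] n hn; first lia.
case: n hn => [|[|N]] hn; first lia.
  by rewrite Tf_one; constructor; [case | constructor].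
rewrite Tf_step; apply: NoDup_flatten_key; first exact: iota_uniq.
  move=> k /In_mem /In_iota hk; apply: NoDup_prs; apply: IH; lia.
move=> k t /In_mem /In_iota hk /In_prs [x [y [-> [hx _]]]].
have hk' : (1 <= k <= f)%N by lia.
by rewrite key_join; apply/(Tf_In hk').
Qed.

Local Open Scope ring_scope.

Lemma big_In_eq (s : seq ptree) (F G : ptree -> rat) :
  (forall x, List.In x s -> F x = G x) -> \sum_(x <- s) F x = \sum_(x <- s) G x.
Proof.
elim: s => [|x s IH] h; first by rewrite !big_nil.
rewrite !big_cons h /=; last by left.
by rewrite IH // => y hy; apply: h; right.
Qed.

Lemma sum_prs (F : ptree -> rat) s1 s2 :
  \sum_(t <- prs s1 s2) F t = \sum_(x <- s1) \sum_(y <- s2) F (join x y).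
Proof.
elim: s1 => [|x s IH] /=; first by rewrite !big_nil.
by rewrite big_cat big_map IH big_cons.
Qed.

Lemma sum_Tf_step (F : ptree -> rat) f N :
  \sum_(t <- Tf f.+1 N.+2) F t =
  \sum_(0 <= a < N.+1) \sum_(x <- Tf f a.+1) \sum_(y <- Tf f (N - a).+1) F (join x y).
Proof.
rewrite Tf_step big_flatten big_map.
rewrite (_ : iota 1 N.+1 = index_iota 1 N.+2); last by rewrite /index_iota subn1.
rewrite big_add1 /=; apply: eq_big_nat => a /andP[_ ha].
by rewrite sum_prs subSS subSn.
Qed.

Section Pairs.
Variables (s1 s2 : seq ptree).
Lemma pp_prod (a b : ptree -> rat) :
  \sum_(x <- s1) \sum_(y <- s2) (a x * b y) = (\sum_(x <- s1) a x) * (\sum_(y <- s2) b y).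
Proof. by rewrite mulr_suml; apply: eq_bigr => x _; rewrite mulr_sumr. Qed.
Lemma pp_split (F G : ptree -> ptree -> rat) :
  \sum_(x <- s1) \sum_(y <- s2) (F x y + G x y) =
  \sum_(x <- s1) \sum_(y <- s2) F x y + \sum_(x <- s1) \sum_(y <- s2) G x y.
Proof. by rewrite -big_split; apply: eq_bigr => x _; rewrite big_split. Qed.
Lemma pp_scale c (F : ptree -> ptree -> rat) :
  \sum_(x <- s1) \sum_(y <- s2) (c * F x y) = c * \sum_(x <- s1) \sum_(y <- s2) F x y.
Proof. by rewrite mulr_sumr; apply: eq_bigr => x _; rewrite mulr_sumr. Qed.
Lemma pp_term c (a b : ptree -> rat) :
  \sum_(x <- s1) \sum_(y <- s2) (c * (a x * b y)) = c * ((\sum_(x <- s1) a x) * (\sum_(y <- s2) b y)).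
Proof. by rewrite pp_scale pp_prod. Qed.
End Pairs.

Definition S1 (s : seq ptree) := \sum_(t <- s) (1 : rat).
Definition SI (s : seq ptree) := \sum_(t <- s) (isl t)%:R : rat.
Definition SD (s : seq ptree) := \sum_(t <- s) (Dv t)%:R : rat.
Definition SW (s : seq ptree) := \sum_(t <- s) (W2 t)%:R : rat.
Definition SLc (s : seq ptree) := \sum_(t <- s) (Lc t)%:R : rat.
Definition SLD (s : seq ptree) := \sum_(t <- s) (LD t)%:R : rat.

Section PairLemmas.
Variables (s1 s2 : seq ptree) (k m : nat).
Hypothesis h1 : forall x, List.In x s1 -> Nv x = k.
Hypothesis h2 : forall y, List.In y s2 -> Nv y = m.

Lemma pair1 : \sum_(x <- s1) \sum_(y <- s2) (1 : rat) = S1 s1 * S1 s2.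
Proof. by rewrite -pp_prod; apply: eq_bigr => x _; apply: eq_bigr => y _; rewrite mulr1. Qed.

Lemma pairI : \sum_(x <- s1) \sum_(y <- s2) ((isl (join x y))%:R : rat) = 0.
Proof. by rewrite big1 // => x _; rewrite big1 // => y _; case: y. Qed.

Lemma pairD : \sum_(x <- s1) \sum_(y <- s2) ((Dv (join x y))%:R : rat) =
  SD s1 * S1 s2 + k%:R * S1 s1 * S1 s2 + S1 s1 * SD s2.
Proof.
rewrite (big_In_eq (G := fun x => \sum_(y <- s2) ((Dv x)%:R * 1 + k%:R * (1 * 1) + 1 * (Dv y)%:R))); last first.
  move=> x hx; apply: eq_bigr => y _; rewrite Dv_join (h1 hx) !natrD; ring.
rewrite !pp_split pp_scale !pp_prod /SD /S1 -mulrA; by congr (_ + _ + _).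
Qed.

Lemma pairW : \sum_(x <- s1) \sum_(y <- s2) ((W2 (join x y))%:R : rat) =
  SW s1 * S1 s2 + S1 s1 * SW s2 + 2 * (m%:R * SD s1 * S1 s2 + k%:R * m%:R * S1 s1 * S1 s2
   + k%:R * S1 s1 * SD s2).
Proof.
rewrite (big_In_eq (G := fun x => \sum_(y <- s2) ((W2 x)%:R * 1 + 1 * (W2 y)%:R +
    (2 * m%:R) * ((Dv x)%:R * 1) + (2 * k%:R * m%:R) * (1 * 1) + (2 * k%:R) * (1 * (Dv y)%:R)))); last first.
  move=> x hx; apply: big_In_eq => y hy.
  rewrite W2_join (h1 hx) (h2 hy) !natrD !natrM.
  move: (W2 x)%:R (W2 y)%:R (Dv x)%:R (Dv y)%:R (k%:R : rat) (m%:R : rat) => a b c d e g; ring.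
rewrite !pp_split !pp_term !pp_prod /SW /SD /S1.
move: (\sum_(x <- s1) (W2 x)%:R) (\sum_(i <- s2) (1 : rat)) (\sum_(i <- s1) (1 : rat))
  (\sum_(y <- s2) (W2 y)%:R) (\sum_(x <- s1) (Dv x)%:R) (\sum_(y <- s2) (Dv y)%:R) => a b c d e g.
ring.
Qed.

Lemma pairLc : \sum_(x <- s1) \sum_(y <- s2) ((Lc (join x y))%:R : rat) =
  SLc s1 * S1 s2 + S1 s1 * SLc s2 - S1 s1 * SI s2.
Proof.
rewrite (eq_bigr (fun x => \sum_(y <- s2) ((Lc x)%:R * 1 + 1 * (Lc y)%:R + (-1) * (1 * (isl y)%:R)))); last first.
  move=> x _; apply: eq_bigr => y _.
  have := Lc_join x y; move/(congr1 (fun n => n%:R : rat)); rewrite !natrD => e.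
  by rewrite mulr1 mul1r mul1r mulN1r -e addrK.
by rewrite !pp_split !pp_term !pp_prod /SLc /SI /S1 mulN1r.
Qed.

Lemma pairLD : \sum_(x <- s1) \sum_(y <- s2) ((LD (join x y))%:R : rat) =
  SLD s1 * S1 s2 + SLc s1 * S1 s2 + S1 s1 * SLD s2.
Proof.
rewrite (eq_bigr (fun x => \sum_(y <- s2) ((LD x)%:R * 1 + (Lc x)%:R * 1 + 1 * (LD y)%:R))); last first.
  by move=> x _; apply: eq_bigr => y _; rewrite LD_join !natrD !mulr1 mul1r.
by rewrite !pp_split !pp_prod.
Qed.

Lemma pairN t : List.In t (prs s1 s2) -> Nv t = (k + m)%N.
Proof. by case/In_prs=> x [y [-> [hx hy]]]; rewrite Nv_join (h1 hx) (h2 hy). Qed.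
End PairLemmas.

Definition Inv (s : seq ptree) (n : nat) :=
  (forall t, List.In t s -> Nv t = n) /\ S1 s = cntf n /\ SI s = islf n /\
      SD s = sdf n /\ SW s = swf n /\ SLc s = slcf n /\ SLD s = sldf n.

Lemma Tf_sums f : forall n, (1 <= n <= f)%N -> Inv (Tf f n) n.
Proof.
elim: f => [|f IH] n hn; first lia.
case: n hn => [|[|N]] hn; first lia.
  rewrite Tf_one /Inv /S1 /SI /SD /SW /SLc /SLD !big_cons !big_nil.
  have e1 : Dv (Node [::]) = 0%N by rewrite /Dv big_cons big_nil.
  have e2 : W2 (Node [::]) = 0%N by rewrite /W2 big_cons big_nil big_cons big_nil.
  have e3 : LD (Node [::]) = 0%N by rewrite /LD big_cons big_nil.
  have e4 : Lc (Node [::]) = 1%N by [].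
  rewrite e1 e2 e3 e4 /= !addr0.
  split; first by move=> t [<-|].
  split; first by rewrite /cntf /C /= B0 divr1.
  split; first by rewrite /islf.
  split; first by rewrite /sdf /= B0 /P4 expr0 subrr mul0r.
  split; first by rewrite /swf /=; field.
  split; first by rewrite /slcf /islf /= B0; field.
  by rewrite /sldf /islf /= /P4 expr0 subrr.
have IHa : forall a, (a <= N)%N -> Inv (Tf f a.+1) a.+1 /\ Inv (Tf f (N - a).+1) (N - a).+1.
  by move=> a ha; split; apply: IH; lia.
split.
  move=> t; rewrite Tf_step In_flatten => -[s [/In_map [k [<- /In_iota hk]]] ht].
  have [[ha _] [hb _]] : Inv (Tf f k) k /\ Inv (Tf f (N.+2 - k)) (N.+2 - k).
    by split; apply: IH; lia.
  rewrite (pairN ha hb ht); lia.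
split.
  rewrite /S1 sum_Tf_step -FC; apply: eq_big_nat => a /andP[_ ha].
  have [[ha1 [ha2 _]] [hb1 [hb2 _]]] := IHa a ha.
  by rewrite (pair1 (Tf f a.+1)) ha2 hb2.
split.
  by rewrite /SI sum_Tf_step big1 /islf // => a _; exact: pairI.
split.
  rewrite /SD sum_Tf_step -FD; apply: eq_big_nat => a /andP[_ ha].
  have [[ha1 [ha2 [_ [ha4 _]]]] [hb1 [hb2 [_ [hb4 _]]]]] := IHa a ha.
  by rewrite (pairD _ ha1) -/(SD _) -/(S1 _) ha2 hb2 ha4 hb4.
split.
  rewrite /SW sum_Tf_step -FW; apply: eq_big_nat => a /andP[_ ha].
  have [[ha1 [ha2 [_ [ha4 [ha5 _]]]]] [hb1 [hb2 [_ [hb4 [hb5 _]]]]]] := IHa a ha.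
  by rewrite (pairW ha1 hb1) -/(SD _) -/(S1 _) -/(SW _) ha2 hb2 ha4 hb4 ha5 hb5.
split.
  rewrite /SLc sum_Tf_step -FLc; apply: eq_big_nat => a /andP[_ ha].
  have [[ha1 [ha2 [_ [_ [_ [ha6 _]]]]]] [hb1 [hb2 [hb3 [_ [_ [hb6 _]]]]]]] := IHa a ha.
  by rewrite (pairLc (Tf f a.+1)) -/(SLc _) -/(S1 _) -/(SI _) ha2 hb2 hb3 ha6 hb6.
rewrite /SLD sum_Tf_step -FLD; apply: eq_big_nat => a /andP[_ ha].
have [[ha1 [ha2 [_ [_ [_ [ha6 ha7]]]]]] [hb1 [hb2 [hb3 [_ [_ [hb6 hb7]]]]]]] := IHa a ha.
by rewrite (pairLD (Tf f a.+1)) -/(SLc _) -/(S1 _) -/(SLD _) ha2 hb2 ha6 ha7 hb7.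
Qed.

End Part2.
Import Part2.

Module Part3.

Lemma lcpC u w : lcp u w = lcp w u.
Proof.
elim: u w => [|a u IH] [|b w] //=.
by rewrite eq_sym IH; case: (b == a).
Qed.

Lemma lcp_refl u : lcp u u = size u.
Proof. by elim: u => [|a u IH] //=; rewrite eqxx IH. Qed.

Lemma distC u w : dist u w = dist w u.
Proof. by rewrite /dist lcpC addnC. Qed.

Lemma dist0 u : dist u u = 0%N.
Proof. rewrite /dist lcp_refl; lia. Qed.

Lemma tri_sum (g : nat -> nat -> nat) n :
  (forall i j, g i j = g j i) -> (forall i, g i i = 0%N) ->
  (2 * \sum_(0 <= j < n) \sum_(0 <= i < j) g i j = \sum_(0 <= i < n) \sum_(0 <= j < n) g i j)%N.
Proof.
move=> hs h0; elim: n => [|n IH]; first by rewrite !big_geq.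
rewrite !big_nat_recr //= mulnDr IH h0 addn0.
have e1 : \sum_(0 <= i < n) \sum_(0 <= j < n.+1) g i j =
   (\sum_(0 <= i < n) \sum_(0 <= j < n) g i j + \sum_(0 <= i < n) g i n)%N.
  by rewrite -big_split; apply: eq_bigr => i _; rewrite big_nat_recr.
have e2 : \sum_(0 <= i < n) g n i = \sum_(0 <= i < n) g i n.
  by apply: eq_bigr => i _; apply: hs.
rewrite e1 e2; lia.
Qed.

Lemma wiener_W2 t : (2 * wiener t)%N = W2 t.
Proof.
rewrite /wiener /W2.
set vs := vertices t.
have -> : \sum_(j < size vs) \sum_(i < j) dist (nth [::] vs i) (nth [::] vs j) =
   \sum_(0 <= j < size vs) \sum_(0 <= i < j) dist (nth [::] vs i) (nth [::] vs j).
  rewrite big_mkord; apply: eq_bigr => j _; by rewrite big_mkord.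
rewrite tri_sum; last by move=> i; exact: dist0.
  rewrite (big_nth [::]); apply: eq_bigr => i _; by rewrite (big_nth [::]).
by move=> i j; exact: distC.
Qed.

Lemma dfact_even k : dfact k.*2 = (2 ^ k * k`!)%N.
Proof.
elim: k => [|k IH] //.
rewrite doubleS /= IH factS expnS -addnn; move: (2 ^ k)%N (k`!) => x y; nia.
Qed.

Lemma dfact_pair k : (dfact k.+1 * dfact k)%N = k.+1`!.
Proof.
elim: k => [|k IH] //.
rewrite (_ : dfact k.+2 = k.+2 * dfact k)%N // factS -IH; move: (dfact k) (dfact k.+1) => x y; nia.
Qed.

Lemma perm_sum (F : ptree -> nat) s s' : Permutation.Permutation s s' ->
  \sum_(t <- s) F t = \sum_(t <- s') F t.
Proof.
elim=> [|x l l' _ IH|x y l|l l' l'' _ IH1 _ IH2].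
- by [].
- by rewrite !big_cons IH.
- by rewrite !big_cons addnCA.
- by rewrite IH1 IH2.
Qed.

End Part3.
Import Part3.

Module Part4.
Local Open Scope ring_scope.

Lemma S1_size s : S1 s = (size s)%:R.
Proof. by rewrite /S1 -(natr_sum _ s xpredT (fun=> 1%N)) sum1_size. Qed.

Lemma rhs_gen (K e G F : nat) : ('C(K.*2, K) * (F * F) = G)%N -> (2 ^ K * F * e = G)%N ->
  (0 < F)%N -> (0 < 'C(K.*2, K))%N ->
  (((2 ^ K * F)%N)%:R / (2 * e%:R) : rat) = P4 K / (2 * B K).
Proof.
move=> hb hp hF hB.
have hB' : B K != 0 by rewrite /B pnatr_eq0 -lt0n.
have hF' : (F%:R : rat) != 0 by rewrite pnatr_eq0 -lt0n.
have h2 : (2%:R ^+ K : rat) != 0 by rewrite expf_neq0.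
move/(congr1 (fun x => x%:R : rat)): hb; rewrite !natrM -/(B K) => hb.
move/(congr1 (fun x => x%:R : rat)): hp; rewrite !natrM natrX => hp.
have he : (e%:R : rat) = G%:R / (2%:R ^+ K * F%:R).
  by rewrite -hp; field; rewrite hF' h2.
have hP : P4 K = 2%:R ^+ K * 2%:R ^+ K by rewrite /P4 -exprMn.
rewrite he -hb hP.
by move: (2%:R ^+ K : rat) (F%:R : rat) (B K) h2 hF' hB' => x y z hx hy hz; field; rewrite hx hy hz.
Qed.

Lemma rhs_eq m : ((dfact (2 * m.+2 - 2))%:R / (2 * (dfact (2 * m.+2 - 3))%:R) : rat)
   = P4 m.+1 / (2 * B m.+1).
Proof.
rewrite (_ : (2 * m.+2 - 2)%N = (m.+1).*2); last by rewrite -!addnn; lia.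
rewrite (_ : (2 * m.+2 - 3)%N = (m.*2).+1); last by rewrite -!addnn; lia.
rewrite dfact_even; apply: (@rhs_gen m.+1 _ ((m.+1).*2)`!).
- have hh := @bin_fact ((m.+1).*2) (m.+1); rewrite -addnn addKn addnn in hh; apply: hh; by rewrite -addnn leq_addr.
- by rewrite -dfact_even doubleS dfact_pair.
- exact: fact_gt0.
- by rewrite bin_gt0 -addnn leq_addr.
Qed.


End Part4.
Import Part4.

Unset Implicit Arguments.
Local Open Scope ring_scope.

Theorem corollary3p3 (n : nat) (hn : (2 <= n)%N) (s : seq ptree)
    (hs_nodup : List.NoDup s)
    (hs_all : forall t : ptree, List.In t s <-> ptsize t = n) :
  (\sum_(t <- s) wiener t = (n - 1) * 4 ^ (n - 2))%N
  /\ ((\sum_(t <- s) wiener t)%:R / ((size s)%:R * ('C(n, 2))%:R) : rat)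
       = (dfact (2 * n - 2))%:R / (2 * (dfact (2 * n - 3))%:R)
  /\ ((\sum_(t <- s) \sum_(l <- leaves t) size l)%:R
        / (\sum_(t <- s) size (leaves t))%:R : rat)
       = (dfact (2 * n - 2))%:R / (2 * (dfact (2 * n - 3))%:R).
Proof.
have H : (1 <= n <= n)%N by rewrite leqnn andbT; apply: leq_trans hn.
have hT := Tf_In H; have hTn := Tf_NoDup H.
have P : Permutation.Permutation s (Tf n n).
  apply: Permutation.NoDup_Permutation => // x; rewrite hs_all; split; by move/hT.
have [_ [h1 [_ [_ [hW [hLc hLD]]]]]] := Tf_sums H.
move: P h1 hW hLc hLD; case: n hn {hs_all H hT hTn} => [|[|m]] // _ P h1 hW hLc hLD.
set K := m.+1.
have hwien : \sum_(t <- s) ((wiener t)%:R : rat) = K%:R * P4 m.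
  have e : (2 * \sum_(t <- s) wiener t = \sum_(t <- Tf m.+2 m.+2) W2 t)%N.
    rewrite (perm_sum _ P) big_distrr /=; apply: eq_bigr => t _; exact: wiener_W2.
  move/(congr1 (fun x => x%:R : rat)): e; rewrite natrM !natr_sum -/(SW (Tf _ _)) hW /swf /= /P4 exprS => h.
  have nz : (2%:R : rat) != 0 by [].
  apply: (mulfI nz); rewrite h.
  by move: (4%:R ^+ m : rat) (K%:R : rat) => x y; field.
have hKpos : (0 < K)%N by [].
have hsz : ((size s)%:R : rat) = B K / K.+1%:R.
  have e : size s = size (Tf m.+2 m.+2).
    by rewrite -!sum1_size; apply: perm_sum.
  by rewrite e -S1_size h1.
have hC2 : ('C(K.+1, 2)%:R : rat) = K.+1%:R * K%:R / 2.
  have := mul_bin_diag K.+1 1; rewrite bin1 /= => e.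
  move/(congr1 (fun x => x%:R : rat)): e; rewrite !natrM => e.
  have nz : (2%:R : rat) != 0 by [].
  apply: (mulfI nz); rewrite -e.
  by move: (K.+1%:R : rat) (K%:R : rat) => x y; field.
have hBnz : B K != 0 by rewrite /B pnatr_eq0 -lt0n bin_gt0 -addnn leq_addr.
have hRHS := rhs_eq m.
rewrite -/K in hRHS.
have hLD' : ((\sum_(t <- s) \sum_(l <- leaves t) size l)%N%:R : rat) = P4 m.
  rewrite (perm_sum (fun t => LD t) P) natr_sum -/(SLD _) hLD /sldf /islf /= /P4 exprS.
  by move: (4%:R ^+ m : rat) => x; field.
have hLc' : ((\sum_(t <- s) size (leaves t))%N%:R : rat) = B K / 2.
  rewrite (perm_sum (fun t => Lc t) P) natr_sum -/(SLc _) hLc /slcf /islf /=.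
  by move: (B K) => x; field.
split.
  apply/eqP; rewrite -(eqr_nat rat) natr_sum hwien natrM natrX /P4 subn1 subn2 /=.
  by [].
split.
  rewrite natr_sum hwien hsz hC2 hRHS /P4 exprS.
  have hK : (0 : rat) < K%:R by rewrite ltr0n.
  rewrite [K.+1%:R]nS.
  move: (4%:R ^+ m : rat) (B K) (K%:R : rat) hBnz hK => x y z hy hz.
  by fld; rewrite hy.
rewrite hLD' hLc' hRHS /P4 exprS.
by move: (4%:R ^+ m : rat) (B K) hBnz => x y hy; field; rewrite hy.
Qed.
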